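(* Let $K$ be a compact group and $K_1,\dots,K_n$ subgroups of $K$ such that $K=(K_1K_2\cdots K_n)^N$ for some $N\in\mathbb{N}^*$. Then for any finite-dimensional unitary representation $(V,\tau)$ of $K$ without non-zero invariant vector, any $x\in V$, and any $y_1,\dots,y_n\in V$ with $y_i$ invariant under $K_i$ for each $i$, we have $$\|x\|_V\leq 2nN\max_{1\leq i\leq n}\|x-y_i\|_V.$$
   Context: $(K_1K_2\cdots K_n)^N$ denotes the set of products $(k_{11}\cdots k_{n1})\cdots(k_{1N}\cdots k_{nN})$ with $k_{ij}\in K_i$. Representations are continuous. *)

(* Defs.v *)
From HB Require Import structures.
From mathcomp Require Import all_boot all_order all_algebra.
From mathcomp Require Import all_classical all_reals all_analysis.
From mathcomp Require Import complex.
Import numFieldNormedType.Exports.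

Set Implicit Arguments.
Unset Strict Implicit.
Unset Printing Implicit Defensive.

Import Order.TTheory GRing.Theory Num.Theory.
Local Open Scope ring_scope.
Local Open Scope classical_set_scope.

Record compact_group (G : topologicalType) (mul : G -> G -> G) (inv : G -> G)
    (e : G) : Prop := CompactGroup {
  cg_mulA : forall x y z, mul x (mul y z) = mul (mul x y) z;
  cg_mul1g : forall x, mul e x = x;
  cg_mulg1 : forall x, mul x e = x;
  cg_mulVg : forall x, mul (inv x) x = e;
  cg_mulgV : forall x, mul x (inv x) = e;
  cg_mul_cont : continuous (fun p : G * G => mul p.1 p.2);
  cg_inv_cont : continuous inv;
  cg_hausdorff : hausdorff_space G;
  cg_compact : compact [set: G]
}.

Definition is_subgroup (G : Type) (mul : G -> G -> G) (inv : G -> G) (e : G)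
    (H : set G) : Prop :=
  H e /\ (forall x y, H x -> H y -> H (mul x y)) /\ (forall x, H x -> H (inv x)).

Definition gprod (G : Type) (mul : G -> G -> G) (e : G) (s : seq G) : G :=
  foldr mul e s.

Definition prod_power (G : Type) (mul : G -> G -> G) (e : G) (n N : nat)
    (Ks : 'I_n -> set G) : set G :=
  [set g | exists k : 'I_N -> 'I_n -> G,
      (forall j i, Ks i (k j i)) /\
      g = gprod mul e [seq gprod mul e [seq k j i | i <- enum 'I_n] | j <- enum 'I_N]].

(* Finite-dimensional unitary representations, realised (after choosing an
   orthonormal basis) on C^d = 'cV[R[i]]_d with the standard Hermitian product. *)
Definition conjT (R : rcfType) (d : nat) (A : 'M[R[i]]_d) : 'M[R[i]]_d :=
  (map_mx (@conjc R) A)^T.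

Definition unitary_rep (R : realType) (G : topologicalType) (mul : G -> G -> G)
    (d : nat) (tau : G -> 'M[R[i]]_d) : Prop :=
  (forall g h, tau (mul g h) = tau g *m tau h) /\
  (forall g, conjT (tau g) *m tau g = 1%:M) /\
  (forall i j, continuous (fun g => complex.Re (tau g i j)) /\
               continuous (fun g => complex.Im (tau g i j))).

Definition hnorm (R : rcfType) (d : nat) (x : 'cV[R[i]]_d) : R :=
  Num.sqrt (\sum_(i < d) ((complex.Re (x i 0)) ^+ 2 + (complex.Im (x i 0)) ^+ 2)).

Definition invariant_under (G : Type) (R : rcfType) (d : nat)
    (tau : G -> 'M[R[i]]_d) (H : set G) (v : 'cV[R[i]]_d) : Prop :=
  forall k, H k -> tau k *m v = v.

(* Main.v *)
Require Import Defs.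
From HB Require Import structures.
From mathcomp Require Import all_boot all_order all_algebra.
From mathcomp Require Import all_classical all_reals all_analysis.
From mathcomp Require Import complex.
From mathcomp Require Import ring lra.
Import numFieldNormedType.Exports.
Import Order.TTheory GRing.Theory Num.Theory.
Local Open Scope ring_scope.
Local Open Scope classical_set_scope.

Section Norms.
Variable R : rcfType.
Variable d : nat.
Implicit Types u v w : 'cV[R[i]]_d.

Definition hn2 v : R := \sum_(i < d) ((complex.Re (v i 0)) ^+ 2 + (complex.Im (v i 0)) ^+ 2).

Lemma hn_E v : hnorm v = Num.sqrt (hn2 v). Proof. by []. Qed.

Lemma hn2_ge0 v : 0 <= hn2 v.
Proof. by apply: sumr_ge0 => i _; rewrite addr_ge0 // sqr_ge0. Qed.

Lemma hn_ge0 v : 0 <= hnorm v. Proof. exact: sqrtr_ge0. Qed.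

Lemma hn_sqr v : hnorm v ^+ 2 = hn2 v.
Proof. by rewrite sqr_sqrtr // hn2_ge0. Qed.

Lemma ReD (a b : R[i]) : complex.Re (a + b) = complex.Re a + complex.Re b.
Proof. by case: a b => a1 a2 [b1 b2]. Qed.
Lemma ImD (a b : R[i]) : complex.Im (a + b) = complex.Im a + complex.Im b.
Proof. by case: a b => a1 a2 [b1 b2]. Qed.
Lemma ReN (a : R[i]) : complex.Re (- a) = - complex.Re a.
Proof. by case: a. Qed.
Lemma ImN (a : R[i]) : complex.Im (- a) = - complex.Im a.
Proof. by case: a. Qed.
Lemma ReM (a b : R[i]) : complex.Re (a * b) = complex.Re a * complex.Re b - complex.Im a * complex.Im b.
Proof. by case: a b => a1 a2 [b1 b2]. Qed.
Lemma ImM (a b : R[i]) : complex.Im (a * b) = complex.Re a * complex.Im b + complex.Im a * complex.Re b.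
Proof. by case: a b => a1 a2 [b1 b2]. Qed.

Lemma cs (a1 a2 b1 b2 : 'I_d -> R) :
  (\sum_i (a1 i * b1 i + a2 i * b2 i)) ^+ 2 <=
  (\sum_i (a1 i ^+ 2 + a2 i ^+ 2)) * (\sum_i (b1 i ^+ 2 + b2 i ^+ 2)).
Proof.
set A := \sum_i (a1 i ^+ 2 + _); set B := \sum_i (b1 i ^+ 2 + _); set S := \sum_i (a1 i * b1 i + _).
have Q t : 0 <= A + 2 * t * S + t ^+ 2 * B.
  have -> : A + 2 * t * S + t ^+ 2 * B =
     \sum_i ((a1 i + t * b1 i) ^+ 2 + (a2 i + t * b2 i) ^+ 2).
    rewrite /A /B /S !mulr_sumr -!big_split /=; apply: eq_bigr => i _. ring.
  by apply: sumr_ge0 => i _; rewrite addr_ge0 // sqr_ge0.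
have A0 : 0 <= A by apply: sumr_ge0 => i _; rewrite addr_ge0 // sqr_ge0.
have B0 : 0 <= B by apply: sumr_ge0 => i _; rewrite addr_ge0 // sqr_ge0.
have [Bz|Bp] := eqVneq B 0.
  rewrite Bz mulr0.
  have [Sz|Sn] := eqVneq S 0; first by rewrite Sz expr0n.
  have := Q (- (A + 1) / (2 * S)); rewrite Bz mulr0 addr0.
  have -> : 2 * (- (A + 1) / (2 * S)) * S = - (A + 1).
    field; by rewrite Sn.
  lra.
have Bpos : 0 < B by rewrite lt_def Bp B0.
have := Q (- S / B).
have -> : A + 2 * (- S / B) * S + (- S / B) ^+ 2 * B = A - S ^+ 2 / B.
  field; by rewrite Bp.
rewrite subr_ge0 ler_pdivrMr //.
Qed.

Definition ip u v : R := \sum_(i < d) (complex.Re (u i 0) * complex.Re (v i 0) + complex.Im (u i 0) * complex.Im (v i 0)).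

Lemma hn2D u v : hn2 (u + v) = hn2 u + hn2 v + 2 * ip u v.
Proof.
rewrite /hn2 /ip mulr_sumr -!big_split /=; apply: eq_bigr => i _.
rewrite !mxE ReD ImD; ring.
Qed.

Lemma hn2N u : hn2 (- u) = hn2 u.
Proof. by apply: eq_bigr => i _; rewrite !mxE ReN ImN !sqrrN. Qed.

Lemma ip_le u v : ip u v <= hnorm u * hnorm v.
Proof.
have h := cs (fun i => complex.Re (u i 0)) (fun i => complex.Im (u i 0))
   (fun i => complex.Re (v i 0)) (fun i => complex.Im (v i 0)).
rewrite !hn_E -sqrtrM ?hn2_ge0 //.
apply: le_trans (ler_norm _) _.
by rewrite -sqrtr_sqr ler_sqrt // mulr_ge0 // hn2_ge0.
Qed.

Lemma hn_tri u v : hnorm (u + v) <= hnorm u + hnorm v.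
Proof.
rewrite -[X in X <= _]ger0_norm ?hn_ge0 // -[X in _ <= X]ger0_norm ?addr_ge0 ?hn_ge0 //.
rewrite -ler_sqr ?normr_ge0 // !real_normK ?num_real //.
rewrite hn_sqr hn2D sqrrD !hn_sqr.
have := ip_le u v; lra.
Qed.

Lemma hn_opp u : hnorm (- u) = hnorm u.
Proof. by rewrite !hn_E hn2N. Qed.

Lemma hn_sym u v : hnorm (u - v) = hnorm (v - u).
Proof. by rewrite -hn_opp opprB. Qed.

Lemma hn_zero : hnorm (0 : 'cV[R[i]]_d) = 0.
Proof.
rewrite !hn_E (_ : hn2 0 = 0) ?sqrtr0 //; rewrite /hn2 big1 // => i _.
by rewrite mxE /= expr0n /= addr0.
Qed.

Lemma hn_sum (I : finType) (F : I -> 'cV[R[i]]_d) :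
  hnorm (\sum_i F i) <= \sum_i hnorm (F i).
Proof.
apply: (big_ind2 (fun a b => hnorm a <= b)); first by rewrite hn_zero.
  by move=> a b c e h1 h2; apply: le_trans (hn_tri _ _) _; apply: lerD.
by [].
Qed.

Lemma hn_par u v : hn2 (u - v) = 2 * hn2 u + 2 * hn2 v - hn2 (u + v).
Proof.
have -> : hn2 (u - v) = hn2 u + hn2 v - 2 * ip u v.
  rewrite hn2D hn2N; congr (_ + _).
  rewrite /ip -mulrN -sumrN; congr (_ * _); apply: eq_bigr => i _.
  by rewrite !mxE ReN ImN; ring.
rewrite hn2D; ring.
Qed.

Lemma hn2Z z v : hn2 (z *: v) = (complex.Re z ^+ 2 + complex.Im z ^+ 2) * hn2 v.
Proof.
rewrite /hn2 mulr_sumr; apply: eq_bigr => i _.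
by rewrite !mxE ReM ImM; ring.
Qed.

Definition nc (z : R[i]) := Num.sqrt (complex.Re z ^+ 2 + complex.Im z ^+ 2).

Lemma hn_scale z v : hnorm (z *: v) = nc z * hnorm v.
Proof.
by rewrite !hn_E hn2Z sqrtrM // addr_ge0 // sqr_ge0.
Qed.

Lemma normc_le_hnorm v k : nc (v k 0) <= hnorm v.
Proof.
rewrite !hn_E ler_sqrt ?hn2_ge0 // /hn2 (bigD1 k) //= lerDl.
by apply: sumr_ge0 => i _; rewrite addr_ge0 // sqr_ge0.
Qed.


Lemma hn_mul (Y : 'M[R[i]]_d) w :
  hnorm (Y *m w) <= (\sum_k hnorm (col k Y)) * hnorm w.
Proof.
have -> : Y *m w = \sum_k (w k 0 *: col k Y).
  apply/matrixP => i j; rewrite (ord1 j) !mxE summxE; apply: eq_bigr => k _.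
  by rewrite !mxE mulrC.
apply: le_trans (hn_sum _ _) _; rewrite mulr_suml; apply: ler_sum => k _.
rewrite hn_scale mulrC ler_wpM2l ?hn_ge0 //; exact: normc_le_hnorm.
Qed.

Definition ct (m n : nat) (A : 'M[R[i]]_(m, n)) := (map_mx (@conjc R) A)^T.
Arguments ct {m n}.


Lemma ctM m n p (A : 'M[R[i]]_(m, n)) (B : 'M[R[i]]_(n, p)) : ct (A *m B) = ct B *m ct A.
Proof. by rewrite /ct map_mxM trmx_mul. Qed.

Lemma hn2_ct v : hn2 v = complex.Re ((ct v *m v) 0 0).
Proof.
rewrite !mxE /hn2.
elim/big_rec2: _ => [|i a b _ ->]; first by [].
by rewrite ReD !mxE; case: (v i 0) => p q /=; congr (_ + _); ring.
Qed.

End Norms.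
Arguments ct {R m n}.
Arguments hn2 {R d}.
Arguments ip {R d}.
Arguments nc {R}.
Arguments hn_E {R d}.
Arguments hn2_ge0 {R d}.
Arguments hn_ge0 {R d}.
Arguments hn_sqr {R d}.
Arguments hn2D {R d}.
Arguments hn2N {R d}.
Arguments ip_le {R d}.
Arguments hn_tri {R d}.
Arguments hn_opp {R d}.
Arguments hn_sym {R d}.
Arguments hn_sum {R d}.
Arguments hn_par {R d}.
Arguments hn2Z {R d}.
Arguments hn_scale {R d}.
Arguments normc_le_hnorm {R d}.
Arguments hn_mul {R d}.
Arguments hn2_ct {R d}.
Arguments hn_zero {R d}. Arguments ctM {R m n p}.

Section Rep.
Variable R : rcfType.
Variable d : nat.
Variable G : Type.
Variables (mul : G -> G -> G) (e : G) (tau : G -> 'M[R[i]]_d).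
Hypothesis hom : forall g h, tau (mul g h) = tau g *m tau h.
Hypothesis unit : forall g, conjT (tau g) *m tau g = 1%:M.

Lemma hn_tau g (v : 'cV[R[i]]_d) : hnorm (tau g *m v) = hnorm v.
Proof.
rewrite !hn_E !hn2_ct ctM -mulmxA (mulmxA (ct (tau g))).
by have := unit g; rewrite /conjT => ->; rewrite mul1mx.
Qed.

Hypothesis mule : mul e e = e.

Lemma tau_e : tau e = 1%:M.
Proof.
have h : tau e = tau e *m tau e by rewrite -hom mule.
transitivity (conjT (tau e) *m tau e *m tau e); first by rewrite unit mul1mx.
by rewrite -mulmxA -h unit.
Qed.

Variable x : 'cV[R[i]]_d.

Lemma tele (s : seq G) (a : R) : 0 <= a ->
  (forall k, List.In k s -> hnorm (x - tau k *m x) <= a) ->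
  hnorm (x - tau (gprod mul e s) *m x) <= (size s)%:R * a.
Proof.
move=> a0; elim: s => [|k s IH] H /=.
  by rewrite tau_e mul1mx subrr hn_zero mul0r.
rewrite hom -mulmxA.
have -> : x - tau k *m (tau (gprod mul e s) *m x) =
   (x - tau k *m x) + tau k *m (x - tau (gprod mul e s) *m x).
  by rewrite mulmxBr addrA subrK.
apply: le_trans (hn_tri _ _) _; rewrite hn_tau -nat1r mulrDl mul1r.
apply: lerD; first by apply: H; left.
by apply: IH => k' hk; apply: H; right.
Qed.

Lemma inv_bound k (y : 'cV[R[i]]_d) : tau k *m y = y ->
  hnorm (x - tau k *m x) <= 2 * hnorm (x - y).
Proof.
move=> hy.
have -> : x - tau k *m x = (x - y) + tau k *m (y - x).
  by rewrite mulmxBr hy addrA subrK.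
apply: le_trans (hn_tri _ _) _; rewrite hn_tau hn_sym; lra.
Qed.

End Rep.


Section Coer.
Variable R : rcfType.
Variable d : nat.
Variable G : Type.
Variables (e : G) (tau : G -> 'M[R[i]]_d).
Hypothesis noinv : forall v : 'cV[R[i]]_d, (forall g, tau g *m v = v) -> v = 0.

Definition Ms (s : seq G) : 'M[R[i]]_d := (\sum_(j < size s) (1%:M - tau (nth e s j)))%MS.

Lemma Ms_cons g s : Ms (g :: s) = (1%:M - tau g + Ms s)%MS.
Proof. by rewrite /Ms /= big_ord_recl. Qed.

Lemma Ms_step k : exists s, (forall g, (1%:M - tau g <= Ms s)%MS) \/ (k <= \rank (Ms s))%N.
Proof.
elim: k => [|k [s [H|H]]]; first by exists [::]; right.
- by exists s; left.
- case: (boolp.pselect (forall g, (1%:M - tau g <= Ms s)%MS)) => [H2|H2].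
    by exists s; left.
  have [g Hg] : exists g, ~~ (1%:M - tau g <= Ms s)%MS.
    apply: contrapT => H3; apply: H2 => g; apply: contrapT => H4.
    by apply: H3; exists g; apply/negP.
  exists (g :: s); right; rewrite Ms_cons.
  apply: leq_ltn_trans H _; apply: rank_ltmx; rewrite ltmxE addsmxSr /=.
  apply: contra Hg => H5; apply: submx_trans H5; exact: addsmxSl.
Qed.

Lemma Ms_all : exists s, forall g, (1%:M - tau g <= Ms s)%MS.
Proof.
have [s [H|H]] := Ms_step d.+1; first by exists s.
by have := rank_leq_col (Ms s); rewrite leqNgt H.
Qed.

Lemma Ms_full s : (forall g, (1%:M - tau g <= Ms s)%MS) -> (1%:M <= Ms s)%MS.
Proof.
move=> H; rewrite sub1mx /row_full eqn_leq rank_leq_col /=.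
rewrite leqNgt; apply/negP => Hlt.
set K := kermx (Ms s)^T.
have rK : \rank K = (d - \rank (Ms s))%N by rewrite mxrank_ker mxrank_tr.
have K0 : K != 0.
  apply/negP => /eqP K0; move: rK; rewrite K0 mxrank0 => /esym/eqP.
  by rewrite subn_eq0 leqNgt Hlt.
have [i Hi] : exists i, row i K != 0.
  apply: contrapT => H3; move/negP: K0; apply; apply/eqP/row_matrixP => i.
  rewrite row0; apply: contrapT => H4; apply: H3; exists i; exact/eqP.
set v := (row i K)^T.
have Mv : Ms s *m v = 0.
  by rewrite /v -[Ms s]trmxK -trmx_mul -row_mul mulmx_ker row0 trmx0.
have := noinv v; rewrite /v; move=> H6.
move/eqP: Hi; apply; apply: trmx_inj; rewrite trmx0; apply: H6 => g.
have [X HX] := submxP (H g).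
have E : (1%:M - tau g) *m (row i K)^T = 0 by rewrite HX -mulmxA -/v Mv mulmx0.
by move: E; rewrite mulmxBl mul1mx => /eqP; rewrite subr_eq0 eq_sym => /eqP.
Qed.

Lemma coercive : exists L : R, 0 <= L /\ forall (v : 'cV[R[i]]_d) (B : R),
  (forall g, hnorm (v - tau g *m v) <= B) -> hnorm v <= L * B.
Proof.
have [s Hs] := Ms_all; have := Ms_full s Hs; rewrite /Ms => /sub_sumsmxP [Y HY].
exists (\sum_(j < size s) \sum_k hnorm (col k (Y j))); split.
  by apply: sumr_ge0 => j _; apply: sumr_ge0 => k _; exact: hn_ge0.
move=> v B HB.
have -> : v = \sum_(j < size s) Y j *m (v - tau (nth e s j) *m v).
  rewrite -{1}[v]mul1mx HY mulmx_suml; apply: eq_bigr => j _.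
  by rewrite -mulmxA mulmxBl mul1mx.
apply: le_trans (hn_sum _ _) _; rewrite mulr_suml; apply: ler_sum => j _.
apply: le_trans (hn_mul _ _) _; apply: ler_wpM2l; last exact: HB.
by apply: sumr_ge0 => k _; exact: hn_ge0.
Qed.

End Coer.

Section Main.
Variable R : realType.
Variable d : nat.
Variable G : Type.
Variables (mul : G -> G -> G) (e : G) (tau : G -> 'M[R[i]]_d).
Hypothesis hom : forall g h, tau (mul g h) = tau g *m tau h.
Hypothesis unit : forall g, conjT (tau g) *m tau g = 1%:M.
Hypothesis noinv : forall v : 'cV[R[i]]_d, (forall g, tau g *m v = v) -> v = 0.

Definition hf : R[i] := Complex (2^-1) 0.

Lemma hfhf : hf + hf = 1.
Proof. rewrite /hf; apply/eqP; rewrite eq_complex /= addr0 eqxx andbT; apply/eqP; by field. Qed.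

Lemma hn_hf (w : 'cV[R[i]]_d) : hnorm (hf *: w) = hnorm w / 2.
Proof.
rewrite !hn_E hn2Z /hf /= expr0n /= addr0 sqrtrM ?sqr_ge0 // sqrtr_sqr.
by rewrite ger0_norm ?invr_ge0 // mulrC.
Qed.

Lemma hn2_hf (w : 'cV[R[i]]_d) : hn2 (hf *: w) = hn2 w / 4.
Proof. rewrite hn2Z /hf /= expr0n /= addr0 mulrC; by field. Qed.

Lemma hn2_tau g (w : 'cV[R[i]]_d) : hn2 (tau g *m w) = hn2 w.
Proof. by rewrite -!hn_sqr hn_tau. Qed.

Variable x : 'cV[R[i]]_d.

Inductive inC : 'cV[R[i]]_d -> Prop :=
| inC_orb g : inC (tau g *m x)
| inC_mid a b : inC a -> inC b -> inC (hf *: (a + b)).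

Lemma inC_tau h c : inC c -> inC (tau h *m c).
Proof.
elim=> [g|a b _ Ha _ Hb]; first by rewrite mulmxA -hom; exact: inC_orb.
by rewrite -scalemxAr mulmxDr; exact: inC_mid.
Qed.

Lemma inC_bound D c : (forall g, hnorm (x - tau g *m x) <= D) -> inC c -> hnorm (x - c) <= D.
Proof.
move=> HD; elim=> [g|a b _ Ha _ Hb]; first exact: HD.
have -> : x - hf *: (a + b) = hf *: ((x - a) + (x - b)).
  have -> : (x - a) + (x - b) = (x + x) - (a + b) by rewrite addrACA opprD.
  by rewrite scalerBr [hf *: (x + x)]scalerDr -scalerDl hfhf scale1r.
rewrite hn_hf; apply: le_trans (_ : (hnorm (x - a) + hnorm (x - b)) / 2 <= D).
  by rewrite ler_pM2r ?invr_gt0 // hn_tri.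
lra.
Qed.

Lemma main_bound D : (forall g, hnorm (x - tau g *m x) <= D) -> hnorm x <= D.
Proof.
move=> HD.
have [L [L0 HL]] := @coercive R d G e tau noinv.
pose E := [set t : R | exists c, inC c /\ t = hn2 c].
have hasE : has_inf E.
  split; first by exists (hn2 (tau e *m x)); exists (tau e *m x); split=> //; exact: inC_orb.
  by exists 0 => t [c [_ ->]]; exact: hn2_ge0.
set r := inf E.
have lbE : forall c, inC c -> r <= hn2 c.
  by move=> c hc; apply: (ge_inf hasE.2); exists c.
have r0 : 0 <= r.
  by apply: lb_le_inf; [exact: hasE.1| move=> t [c [_ ->]]; exact: hn2_ge0].
have key : forall c, inC c -> hn2 c <= 4 * L ^+ 2 * (hn2 c - r).
  move=> c hc.
  have hcr := lbE c hc.
  have HB : forall g, hnorm (c - tau g *m c) <= Num.sqrt (4 * (hn2 c - r)).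
    move=> g; rewrite hn_E ler_sqrt; last by rewrite mulr_ge0 // subr_ge0.
    rewrite hn_par hn2_tau.
    have : r <= hn2 (hf *: (c + tau g *m c)).
      by apply: lbE; apply: inC_mid => //; exact: inC_tau.
    rewrite hn2_hf; lra.
  have := HL c _ HB.
  move=> h1.
  have h2 : hnorm c ^+ 2 <= (L * Num.sqrt (4 * (hn2 c - r))) ^+ 2.
    by rewrite lerXn2r // ?nnegrE ?hn_ge0 // mulr_ge0 // sqrtr_ge0.
  by move: h2; rewrite hn_sqr exprMn sqr_sqrtr ?mulr_ge0 ?subr_ge0 // mulrA [L ^+ 2 * 4]mulrC.
have rz : r = 0.
  apply/eqP; rewrite eq_le r0 andbT; rewrite leNgt; apply/negP => rp.
  pose K := L ^+ 2.
  have K0 : 0 <= K by rewrite /K sqr_ge0.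
  have dp : 0 < r / (8 * K + 1) by rewrite divr_gt0 //; lra.
  have [t [c [hc ->]] ht] := inf_adherent dp hasE.
  have k1 := key c hc; have k2 := lbE c hc.
  rewrite -/r -/K in ht k1.
  have h3 : (hn2 c - r) * (8 * K + 1) < r.
    by rewrite -ltr_pdivlMr; lra.
  nra.
have [c hc] : exists c, inC c by exists (tau e *m x); exact: inC_orb.
rewrite leNgt; apply/negP => Hx.
have dp : 0 < (hnorm x - D) ^+ 2 by rewrite exprn_gt0 // subr_gt0.
have [t [c' [hc' ->]] ht] := inf_adherent dp hasE.
rewrite -/r rz add0r in ht.
have hc'D := inC_bound D c' HD hc'.
have hnc : hnorm c' < hnorm x - D.
  have -> : hnorm x - D = Num.sqrt ((hnorm x - D) ^+ 2).
    by rewrite sqrtr_sqr gtr0_norm // subr_gt0.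
  by rewrite hn_E ltr_sqrt.
have := hn_tri (x - c') c'; rewrite subrK; lra.
Qed.

End Main.

Lemma In_map_inv (A B : Type) (f : A -> B) (s : seq A) (y : B) :
  List.In y (map f s) -> exists a, y = f a.
Proof.
elim: s => [//|a s IH] /= [<-|H]; first by exists a.
exact: IH.
Qed.

Arguments In_map_inv {A B f s y}.

Theorem lemma3p10 (R : realType) (G : topologicalType)
    (mul : G -> G -> G) (inv : G -> G) (e : G)
    (hG : compact_group mul inv e)
    (n N : nat) (hn : (0 < n)%N) (hN : (0 < N)%N) (Ks : 'I_n -> set G)
    (hKs : forall i, is_subgroup mul inv e (Ks i))
    (hprod : [set: G] = prod_power mul e N Ks)
    (d : nat) (tau : G -> 'M[R[i]]_d) (htau : unitary_rep mul tau)
    (hnoinv : forall v : 'cV[R[i]]_d, invariant_under tau [set: G] v -> v = 0)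
    (x : 'cV[R[i]]_d) (y : 'I_n -> 'cV[R[i]]_d)
    (hy : forall i, invariant_under tau (Ks i) (y i)) :
  hnorm x <= (2 * n * N)%:R * \big[Num.max/0]_(i < n) hnorm (x - y i).
Proof.
have [hom [unit _]] := htau.
have mule : mul e e = e by apply: (cg_mul1g hG).
have noinv : forall v : 'cV[R[i]]_d, (forall g, tau g *m v = v) -> v = 0.
  by move=> v Hv; apply: hnoinv => k _; exact: Hv.
set Mx := \big[Num.max/0]_(i < n) hnorm (x - y i).
have leM : forall i, hnorm (x - y i) <= Mx by move=> i; exact: le_bigmax.
have M0 : 0 <= Mx by apply: le_trans (leM (Ordinal hn)); exact: hn_ge0.
apply: (@main_bound R d G mul e tau hom unit noinv) => g.
have : prod_power mul e N Ks g by rewrite -hprod.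
move=> [k [hk ->]].
have -> : (2 * n * N)%:R * Mx = (size [seq gprod mul e [seq k j i | i <- enum 'I_n] | j <- enum 'I_N])%:R * (n%:R * (2 * Mx)).
  by rewrite size_map size_enum_ord !natrM; ring.
apply: (@tele R d G mul e tau hom unit mule x); first by rewrite mulr_ge0 // mulr_ge0.
move=> k' /In_map_inv [j ->].
have -> : n%:R * (2 * Mx) = (size [seq k j i | i <- enum 'I_n])%:R * (2 * Mx).
  by rewrite size_map size_enum_ord.
apply: (@tele R d G mul e tau hom unit mule x); first by rewrite mulr_ge0.
move=> k'' /In_map_inv [i ->].
apply: le_trans (@inv_bound R d G tau unit x (k j i) (y i) (hy i _ (hk j i))) _.
by rewrite ler_pM2l // leM.
Qed.
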